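(* Let $V$ be a population of $n$ individuals with pseudo-metric $d$, let $k$ be a panel size, and let $\mathcal{G}$ be the output of the Greedy Capture procedure (defined in the context) on $V$ with panel size $k$. Let $\alpha\ge 1$ and let $P\subseteq V$ be such that for every $G\in\mathcal{G}$ there exists $p\in P$ with $d(p,c_G)\le\alpha\cdot r_G$. Then $P$ satisfies $(\alpha+3)$-PFC for population $V$ with panel size $k$.
   Context: $B(x,\delta)=\{u\in V: d(x,u)\le\delta\}$. Greedy Capture with panel size $K$ (Modified Greedy Capture with every individual initially its own group): maintain a set $U$ of uncovered individuals, initially $V$, and an output collection initially empty; increase $\delta$ continuously from $0$ while $U\ne\emptyset$. At each $\delta$: for each already formed group with center $c$, remove $U\cap B(c,\delta)$ from $U$; then, while some $x\in V$ has $|U\cap B(x,\delta)|\ge n/K$, form the group $U\cap B(x,\delta)$ with center $c_G=x$ and radius $r_G=\delta$, add it to the output and remove its members from $U$. A set $P\subseteq V$ satisfies $\gamma$-PFC for population $V$ with panel size $k$ if for every $S\subseteq V$ with $|S|\ge n/k$ there exist $v\in S$, $p\in P$ with $d(v,p)\le\gamma\cdot\min_{y\in V}\max_{u\in S}d(u,y)$. *)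

(* Defs.v *)
From HB Require Import structures.
From mathcomp Require Import all_boot all_order all_algebra.
Set Implicit Arguments. Unset Strict Implicit. Unset Printing Implicit Defensive.
Import Order.TTheory GRing.Theory Num.Theory.
Local Open Scope ring_scope.

(* A group formed by Greedy Capture: its member set (at formation),
   its center c_G and its radius r_G. *)
Record group (T : finType) (R : realFieldType) := Group {
  members : {set T};
  center : T;
  radius : R }.

Definition pseudometric (T : finType) (R : realFieldType) (d : T -> T -> R) :=
  [/\ forall x, d x x = 0,
      forall x y, d x y = d y x
    & forall x y z, d x z <= d x y + d y z].

Definition ball (T : finType) (R : realFieldType) (d : T -> T -> R) (x : T) (delta : R)
  : {set T} := [set u | d x u <= delta].

Definition uncovered (T : finType) (R : realFieldType) (d : T -> T -> R)
  (gs : seq (group T R)) (delta : R) : {set T} :=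
  ~: (\bigcup_(g <- gs) (members g :|: ball d (center g) delta)).

Definition thr (T : finType) (R : realFieldType) (K : nat) : R :=
  #|T|%:R / K%:R.

(* gs (in formation order) is a possible output (execution trace) of
   Greedy Capture with panel size K. *)
Definition greedy_capture (T : finType) (R : realFieldType) (d : T -> T -> R)
  (K : nat) (gs : seq (group T R)) : Prop :=
  (forall pre g post, gs = pre ++ g :: post ->
     [/\ 0 <= radius g,
         all (fun g' => radius g' <= radius g) pre,
         members g = uncovered d pre (radius g) :&: ball d (center g) (radius g),
         thr T R K <= #|members g|%:R
       & forall delta, 0 <= delta -> delta < radius g ->
           all (fun g' => radius g' <= delta) pre ->
           forall x, #|uncovered d pre delta :&: ball d x delta|%:R < thr T R K])
  /\
  (forall delta, 0 <= delta -> all (fun g' => radius g' <= delta) gs ->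
     forall x, #|uncovered d gs delta :&: ball d x delta|%:R < thr T R K).

(* max_{u in S} d(u, y)  (distances are nonnegative, S nonempty in use) *)
Definition cost (T : finType) (R : realFieldType) (d : T -> T -> R) (S : {set T}) (y : T) : R :=
  \big[Num.max/0]_(u in S) d u y.

(* min_{y in V} max_{u in S} d(u, y); the seed is itself one of the values
   (the largest), so it does not affect the minimum when T is nonempty. *)
Definition optrad (T : finType) (R : realFieldType) (d : T -> T -> R) (S : {set T}) : R :=
  \big[Num.min/(\big[Num.max/0]_(y : T) cost d S y)]_(y : T) cost d S y.

Definition PFC (T : finType) (R : realFieldType) (d : T -> T -> R)
  (gamma : R) (P : {set T}) (k : nat) : Prop :=
  forall S : {set T}, thr T R k <= #|S|%:R ->
    exists v p, [/\ v \in S, p \in P & d v p <= gamma * optrad d S].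

(* Main.v *)
Require Import Defs.
From HB Require Import structures.
From mathcomp Require Import all_boot all_order all_algebra.
From mathcomp Require Import lra.
Import Order.TTheory GRing.Theory Num.Theory.
Local Open Scope ring_scope.

Lemma split_all (A : Type) (q : pred A) (s : seq A) :
  all q s \/ exists pre g post, s = pre ++ g :: post /\ all q pre /\ ~~ q g.
Proof.
elim: s => [|a s [IH|[pre [g [post [E [H1 H2]]]]]]]; first by left.
- case Ha: (q a); first by left; rewrite /= Ha IH.
  by right; exists [::], a, s; rewrite Ha.
- case Ha: (q a); last by right; exists [::], a, s; rewrite Ha.
  by right; exists (a :: pre), g, post; rewrite E /= Ha H1.
Qed.

Lemma in_bigcup_seq (T : finType) (A : Type) (F : A -> {set T}) (s : seq A) x :
  x \in \bigcup_(g <- s) F g ->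
  exists pre g post, s = pre ++ g :: post /\ x \in F g.
Proof.
elim: s => [|a s IH]; first by rewrite big_nil inE.
rewrite big_cons inE => /orP [H|H]; first by exists [::], a, s.
have [pre [g [post [E Hx]]]] := IH H.
by exists (a :: pre), g, post; rewrite E.
Qed.

Lemma le_bigmax_seq (T : eqType) (R : realFieldType) (F : T -> R) (P : pred T) s u :
  u \in s -> P u -> F u <= \big[Num.max/0]_(i <- s | P i) F i.
Proof.
elim: s => [|a s IH] //; rewrite inE big_cons => /orP [/eqP <-|Hu] Pu.
  by rewrite Pu le_max lexx.
case: ifP => _; last exact: IH.
by rewrite le_max IH // orbT.
Qed.

Theorem lemma7 (T : finType) (R : realFieldType) (d : T -> T -> R) (k : nat)
  (gs : seq (group T R)) (alpha : R) (P : {set T}) :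
  (0 < #|T|)%N -> (0 < k)%N -> pseudometric d ->
  greedy_capture d k gs ->
  1 <= alpha ->
  (forall pre g post, gs = pre ++ g :: post ->
     exists p, p \in P /\ d p (center g) <= alpha * radius g) ->
  PFC d (alpha + 3) P k.
Proof.
move=> T0 k0 [d0 dsym dtri] [Hstep Hfin] ha HP S HS.
have dge0 : forall x y, 0 <= d x y.
  move=> x y; have := dtri x y x; rewrite d0 (dsym y x) => h.
  have : 0 <= d x y + d x y by [].
  lra.
have [y0 _] : exists y0 : T, true.
  by case/card_gt0P: T0 => y0 _; exists y0.
have [y Hy] : exists y, cost d S y <= optrad d S.
  rewrite /optrad; apply: (big_ind (fun x => exists y, cost d S y <= x)).
  - exists y0; apply: (@le_bigmax_seq _ _ (fun y => cost d S y) xpredT) => //.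
  - move=> a b [ya Ha] [yb Hb]; rewrite /Num.min; case: ifP => _.
    by exists ya. by exists yb.
  - by move=> i _; exists i.
set r := cost d S y in Hy.
have r0 : 0 <= r.
  rewrite /r /cost; apply: (big_ind (fun x => 0 <= x)) => //.
  by move=> a b ha0 hb0; rewrite le_max ha0.
have HSr : forall u, u \in S -> d y u <= r.
  move=> u uS; rewrite dsym /r /cost.
  exact: (@le_bigmax_seq _ _ (fun u => d u y) (fun u => u \in S) _ u (mem_index_enum u) uS).
have key : forall pre, #|uncovered d pre r :&: ball d y r|%:R < thr T R k ->
   exists u pre1 g post1, [/\ u \in S, pre = pre1 ++ g :: post1 &
      u \in members g :|: ball d (center g) r].
  move=> pre Hlt.
  case: (boolP [exists u, (u \in S) && (u \notin uncovered d pre r)]).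
    move=> /existsP [u /andP [uS]]; rewrite /uncovered inE negbK => /in_bigcup_seq.
    move=> [pre1 [g [post1 [E Hu]]]]; by exists u, pre1, g, post1.
  move=> /existsPn Hn; exfalso.
  have sub : S \subset uncovered d pre r :&: ball d y r.
    apply/subsetP => u uS; have := Hn u; rewrite uS /= negbK => Hu.
    by rewrite inE Hu inE HSr.
  have := subset_leq_card sub; rewrite -(ler_nat R) => hc.
  move: HS hc Hlt; lra.
have [u [pre1 [g [post [uS Egs rg Hu]]]]] :
  exists u pre1 g post, [/\ u \in S, gs = pre1 ++ g :: post, radius g <= r &
      u \in members g :|: ball d (center g) r].
  case: (@split_all _ (fun g' => radius g' <= r) gs) => [Hall|[pre [g [post [E [Hall Hg]]]]]].
    have [u [pre1 [g [post1 [uS E Hu]]]]] := key gs (Hfin r r0 Hall y).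
    exists u, pre1, g, post1; split => //.
    by move: Hall; rewrite E all_cat /= => /and3P [].
  have [_ _ _ _ H5] := Hstep _ _ _ E.
  have Hg' : r < radius g by rewrite ltNge.
  have [u [pre1 [g' [post1 [uS E' Hu]]]]] := key pre (H5 r r0 Hg' Hall y).
  exists u, pre1, g', (post1 ++ g :: post); split => //.
    by rewrite E E' -catA.
  by move: Hall; rewrite E' all_cat /= => /and3P [].
have [rg0 _ Hmem _ _] := Hstep _ _ _ Egs.
have Hcu : d (center g) u <= r.
  move: Hu; rewrite inE => /orP [|]; last by rewrite inE.
  rewrite Hmem !inE => /andP [_ h]; exact: le_trans h rg.
have [p [pP Hp]] := HP _ _ _ Egs.
exists u, p; split => //.
have h1 : alpha * radius g <= alpha * r.
  by apply: ler_wpM2l => //; lra.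
have := dtri u (center g) p; rewrite (dsym u (center g)) (dsym (center g) p) => h2.
have h3 : alpha * r <= alpha * optrad d S by apply: ler_wpM2l => //; lra.
nra.
Qed.
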